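(* Let $\rho_1,\rho_2\colon\mathrm{Isom}(\mathbf H^1_{\mathbb C})_o\to\mathrm{Isom}(\mathbf H^\infty_{\mathbb C})_o$ be irreducible representations with $\ell(\rho_1)=\ell(\rho_2)$, having the same distinguished boundary points $\eta_1,\eta_2$ (i.e. $\eta_1$ is fixed by all $\rho_i(g(\lambda,b))$ and $\eta_2$ by all $\rho_i(g(\lambda,0))$, $i=1,2$), and let $K_1,K_2$ be their functions $K$ computed with the same isotropic representatives $\eta_1,\eta_2$, $B(\eta_1,\eta_2)=1$. Then $K_1(b)+K_2(b)\neq0$ for every $b\neq0$.
   Context: $\mathcal H$: separable complex Hilbert space with strongly non-degenerate Hermitian form $B$ (linear in first variable) of signature $(1,\infty)$; $\mathbf H^\infty_{\mathbb C}=\{[v]:B(v,v)>0\}$, $\cosh d([v],[w])=|B(v,w)|/\sqrt{B(v,v)B(w,w)}$, boundary = isotropic lines, $\mathrm{Isom}(\mathbf H^\infty_{\mathbb C})_o=PU(B)$. $\mathbf H^1_{\mathbb C}$: $\mathbb C^2$ with $B(z,w)=z_1\bar w_1-z_2\bar w_2$, $\xi_{1,2}=(e_1\pm e_2)/\sqrt2$; $g(\lambda,b)\in SU(1,1)$ has matrix $\begin{pmatrix}\lambda&ib\\0&\lambda^{-1}\end{pmatrix}$ in basis $(\xi_1,\xi_2)$. Representations are orbitally continuous; irreducible = no fixed point in $\mathbf H^\infty_{\mathbb C}\cup\partial\mathbf H^\infty_{\mathbb C}$, no invariant pair of boundary points, no proper invariant complex hyperbolic subspace. For such $\rho$, $\eta_1$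 is the unique common fixed boundary point of the $\rho(g(\lambda,b))$ and $\eta_2$ the other endpoint of the common axis of the $\rho(g(\lambda,0))$. With $E=\eta_1^\perp\cap\eta_2^\perp$, the lift $T_b\in U(B)$ of $\rho(g(1,b))$ with $T_b\eta_1=\eta_1$ satisfies $T_b\eta_2=K(b)\eta_1+\eta_2+c(b)$, $K(b)\in\mathbb C$, $c(b)\in E$. $\ell(\rho)$ is the $t>0$ with $\inf_xd(\rho(g(\lambda,0))x,x)=t|\ln\lambda|$. *)

(* Defs.v *)
From HB Require Import structures.
From mathcomp Require Import all_boot all_order all_algebra.
From mathcomp Require Import complex.
From mathcomp Require Import boolp classical_sets reals exp.
Set Implicit Arguments. Unset Strict Implicit. Unset Printing Implicit Defensive.
Import Order.TTheory GRing.Theory Num.Theory.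
Local Open Scope ring_scope.
Local Open Scope classical_set_scope.

Section Defs.
Variable R : realType.
Local Notation C := R[i].

Definition cR (x : R) : C := Complex x 0.
Definition modC (z : C) : R := Num.sqrt (complex.Re z ^+ 2 + complex.Im z ^+ 2).

Definition tends_to0 (u : nat -> R) : Prop :=
  forall eps : R, 0 < eps -> exists N : nat, forall n, (N <= n)%N -> `|u n| < eps.

Variable V : lmodType C.
Variable B : V -> V -> C.

Definition hermitian_form : Prop :=
  (forall (a : C) (u v w : V), B (a *: u + v) w = a * B u w + B v w) /\
  (forall u v : V, B v u = conjc (B u v)).

(* the norm on the negative definite part W = e0^perp, and the Hilbert norm *)
Definition nrmW (w : V) : R := Num.sqrt (complex.Re (- B w w)).
Definition hnorm (e0 v : V) : R :=
  Num.sqrt (modC (B v e0) ^+ 2 + nrmW (v - B v e0 *: e0) ^+ 2).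

(* (V, B) is a separable complex Hilbert space whose Hermitian form B is
   strongly non-degenerate of signature (1, infinity), with fundamental
   decomposition V = C e0 (+) e0^perp: B e0 e0 = 1, -B is positive definite
   on e0^perp, and e0^perp is complete, separable and infinite-dimensional
   for the inner product -B (the Hilbert topology is the one of hnorm e0). *)
Definition krein_1_inf (e0 : V) : Prop :=
  [/\ B e0 e0 = 1,
      (forall w, B w e0 = 0 -> w <> 0 -> 0 < complex.Re (- B w w)),
      (forall u : nat -> V, (forall n, B (u n) e0 = 0) ->
         (forall eps : R, 0 < eps -> exists N : nat, forall m n, (N <= m)%N -> (N <= n)%N ->
              nrmW (u m - u n) < eps) ->
         exists w, B w e0 = 0 /\ tends_to0 (fun n => nrmW (u n - w))),
      (exists s : nat -> V, (forall n, B (s n) e0 = 0) /\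
         forall w, B w e0 = 0 -> forall eps : R, 0 < eps -> exists n, nrmW (w - s n) < eps)
    & (forall n : nat, exists f : 'I_n -> V, (forall i, B (f i) e0 = 0) /\
         forall i j, - B (f i) (f j) = (i == j)%:R)].

Definition in_UB (T : V -> V) : Prop :=
  [/\ (forall u v, T (u + v) = T u + T v),
      (forall (a : C) v, T (a *: v) = a *: T v),
      bijective T
    & (forall u v, B (T u) (T v) = B u v)].

(* points of H^oo_C (positive vectors), of the boundary (isotropic nonzero
   vectors), and the distance d([v],[w]) = arccosh(|B(v,w)|/sqrt(B(v,v)B(w,w))) *)
Definition positive (v : V) : Prop := 0 < complex.Re (B v v).
Definition isotropic (v : V) : Prop := v <> 0 /\ B v v = 0.
Definition arccosh (x : R) : R := ln (x + Num.sqrt (x ^+ 2 - 1)).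
Definition hdist (v w : V) : R :=
  arccosh (modC (B v w) / Num.sqrt (complex.Re (B v v) * complex.Re (B w w))).

Definition fixes_line (T : V -> V) (v : V) : Prop := exists c : C, T v = c *: v.

Definition displacement (T : V -> V) : R :=
  inf [set hdist (T v) v | v in [set v | positive v]].

Definition J11 : 'M[C]_2 := \matrix_(i < 2, j < 2)
  (if i == j then (if i == 0 then 1 else -1) else 0).
Definition adjM (M : 'M[C]_2) : 'M[C]_2 := (map_mx conjc M)^T.
Definition inSU11 (M : 'M[C]_2) : Prop := adjM M *m J11 *m M = J11 /\ \det M = 1.

(* the change of basis matrix with columns xi_1 = (e1+e2)/sqrt2, xi_2 = (e1-e2)/sqrt2 *)
Definition Pxi : 'M[C]_2 := \matrix_(i < 2, j < 2)
  (cR (Num.sqrt 2)^-1 * (if (i == 1) && (j == 1) then -1 else 1)).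
(* g(lambda,b): matrix [[lambda, i b],[0, lambda^-1]] in the basis (xi_1, xi_2),
   written in the standard basis (Pxi^-1 = Pxi) *)
Definition gmat (lam b : R) : 'M[C]_2 :=
  Pxi *m (\matrix_(i < 2, j < 2)
            (if i == 0 then (if j == 0 then cR lam else Complex 0 b)
             else (if j == 0 then 0 else cR lam^-1))) *m Pxi.

(* A representation PU(1,1) -> PU(B), given through a choice of lifts
   rho g in U(B) of the image of [g], for g in SU(1,1):
   multiplicative up to unimodular scalars, -1 acting as a scalar,
   and orbitally continuous. *)
Definition unimod (c : C) : Prop := modC c = 1.

Definition is_rep (rho : 'M[C]_2 -> V -> V) : Prop :=
  [/\ (forall g, inSU11 g -> in_UB (rho g)),
      (forall g h, inSU11 g -> inSU11 h ->
         exists c, unimod c /\ forall v, rho (g *m h) v = c *: rho g (rho h v)),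
      (exists c, unimod c /\ forall v, rho (- 1%:M) v = c *: v)
    & (forall v, positive v -> forall g (gs : nat -> 'M[C]_2),
         inSU11 g -> (forall n, inSU11 (gs n)) ->
         (forall i j, tends_to0 (fun n => modC (gs n i j - g i j))) ->
         tends_to0 (fun n => hdist (rho (gs n) v) (rho g v)))].

(* complex hyperbolic subspaces: closed complex linear subspaces containing a
   positive vector *)
Definition closed_subspace (e0 : V) (L : set V) : Prop :=
  [/\ L 0, (forall (a : C) u v, L u -> L v -> L (a *: u + v))
    & (forall (u : nat -> V) v, (forall n, L (u n)) ->
         tends_to0 (fun n => hnorm e0 (u n - v)) -> L v)].

Definition irreducible (e0 : V) (rho : 'M[C]_2 -> V -> V) : Prop :=
  [/\ (* no fixed point in H^oo_C or its boundary *)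
      ~ (exists v, v <> 0 /\ 0 <= complex.Re (B v v) /\
           forall g, inSU11 g -> fixes_line (rho g) v),
      (* no invariant pair of boundary points *)
      ~ (exists v w, isotropic v /\ isotropic w /\ ~ (exists c : C, w = c *: v) /\
           forall g, inSU11 g ->
             (fixes_line (rho g) v /\ fixes_line (rho g) w) \/
             ((exists c : C, rho g v = c *: w) /\ (exists c : C, rho g w = c *: v)))
    &
      ~ (exists L : set V, closed_subspace e0 L /\ (exists u, L u /\ positive u) /\
           L <> setT /\ forall g, inSU11 g -> forall u, L u -> L (rho g u))].

End Defs.

(* Main.v *)
Require Import Defs.
From HB Require Import structures.
From mathcomp Require Import all_boot all_order all_algebra.
From mathcomp Require Import complex.
From mathcomp Require Import boolp classical_sets reals exp.
From mathcomp Require Import ring lra.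
Import Order.TTheory GRing.Theory Num.Theory.
Local Open Scope ring_scope.

Module Aux.
Set Implicit Arguments. Unset Strict Implicit. Unset Printing Implicit Defensive.
Local Open Scope complex_scope.

Section CX.
Variable R : realType.
Local Notation C := R[i].
Local Notation Re := complex.Re.
Local Notation Im := complex.Im.
Implicit Types x y : C.
Lemma cplx_eq (x y : C) : Re x = Re y -> Im x = Im y -> x = y.
Proof. by case: x => a b; case: y => c d /= -> ->. Qed.
Lemma ReM x y : Re (x * y) = Re x * Re y - Im x * Im y. Proof. by case: x => a b; case: y => c d. Qed.
Lemma ImM x y : Im (x * y) = Re x * Im y + Im x * Re y. Proof. by case: x => a b; case: y => c d. Qed.
Lemma ReD x y : Re (x + y) = Re x + Re y. Proof. by case: x => a b; case: y => c d. Qed.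
Lemma ImD x y : Im (x + y) = Im x + Im y. Proof. by case: x => a b; case: y => c d. Qed.
Lemma ReN x : Re (- x) = - Re x. Proof. by case: x. Qed.
Lemma ImN x : Im (- x) = - Im x. Proof. by case: x. Qed.
Lemma Re1 : Re (1 : C) = 1. Proof. by []. Qed.
Lemma Im1 : Im (1 : C) = 0. Proof. by []. Qed.
Lemma Re0 : Re (0 : C) = 0. Proof. by []. Qed.
Lemma Im0 : Im (0 : C) = 0. Proof. by []. Qed.
Lemma RecR (a : R) : Re (cR a) = a. Proof. by []. Qed.
Lemma ImcR (a : R) : Im (cR a) = 0. Proof. by []. Qed.
Lemma ReJ x : Re (conjc x) = Re x. Proof. by case: x. Qed.
Lemma ImJ x : Im (conjc x) = - Im x. Proof. by case: x. Qed.
Lemma ReC (a b : R) : Re (Complex a b) = a. Proof. by []. Qed.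
Lemma ImC (a b : R) : Im (Complex a b) = b. Proof. by []. Qed.
Lemma ReMn x n : Re (x *+ n) = Re x *+ n. Proof. by rewrite raddfMn. Qed.
Lemma ImMn x n : Im (x *+ n) = Im x *+ n. Proof. by rewrite raddfMn. Qed.

Definition cxE := (ReM, ImM, ReD, ImD, ReN, ImN, Re1, Im1, Re0, Im0, RecR, ImcR, ReJ, ImJ, ReC, ImC).

Lemma Re_nrm (z x : C) : Re (z * conjc z * x) = (Re z ^+2 + Im z ^+2) * Re x.
Proof. case: z => a b; case: x => c d. simpc. rewrite /=. ring. Qed.
Lemma Re_addJ (x : C) : Re (x + conjc x) = 2 * Re x.
Proof. rewrite ReD ReJ; ring. Qed.
Lemma ReB (x y : C) : Re (x - y) = Re x - Re y. Proof. by rewrite ReD ReN. Qed.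
Lemma self_conj_Im (x : C) : x = conjc x -> Im x = 0.
Proof. case: x => a b [] /=. lra. Qed.
Definition Re_conj := ReJ.
End CX.
Lemma auxK (R : realType) (x y : R) : 2 * x = - y -> y < 0 -> x = 0 -> False.
Proof. lra. Qed.

Lemma aux_cs (R : realType) (a b c : R) : 0 < c -> (forall t, 0 <= a + 2 * t * b + t ^+ 2 * c) -> b ^+ 2 <= a * c.
Proof.
move=> hc h; have := h (- b / c).
have -> : a + 2 * (- b / c) * b + (- b / c) ^+ 2 * c = (a * c - b ^+ 2) / c.
  by field; rewrite gt_eqF.
by rewrite pmulr_lge0 ?invr_gt0 // subr_ge0.
Qed.

Lemma aux_sqrt (R : realType) (a b c : R) : 0 <= a -> 0 <= c -> b ^+ 2 <= a * c -> `|b| <= Num.sqrt a * Num.sqrt c.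
Proof. move=> ha hc h; rewrite -sqrtrM // -sqrtr_sqr ler_sqrt ?mulr_ge0 //. Qed.

Lemma le_sqrt_l (R : realType) (p q : R) : 0 <= q -> `|p| <= Num.sqrt (p ^+ 2 + q).
Proof. by move=> hq; rewrite -sqrtr_sqr ler_sqrt ?addr_ge0 ?sqr_ge0 // lerDl. Qed.

Lemma lim0 (R : realType) (q Cr : R) (s : nat -> R) : 0 <= Cr -> tends_to0 s ->
  (forall n, `|q| <= Cr * s n) -> q = 0.
Proof.
move=> hC hs hb; apply/eqP; apply: contraT => qn0.
have hq : 0 < `|q| by rewrite normr_gt0.
have [N hN] := hs (`|q| / (Cr + 1)) (divr_gt0 hq (ltr_wpDl hC ltr01)).
have := hN N (leqnn N); move: (hb N).
set x := s N => h1 h2.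
have h3 : Cr * x <= Cr * (`|q| / (Cr + 1)).
  apply: ler_wpM2l => //; apply: le_trans (ltW h2); exact: ler_norm.
have h4 : Cr * (`|q| / (Cr + 1)) < `|q|.
  rewrite mulrA ltr_pdivrMr ?(ltr_wpDl hC ltr01) //; nra.
have := le_lt_trans (le_trans h1 h3) h4; by rewrite ltxx.
Qed.
Lemma aux2 (R : realType) (X : R) : 0 <= X -> (-1 * -1 - - 0 * - 0 - (- 0 * - 0 - - 0 * - 0)) = - (X * 1) -> False.
Proof. lra. Qed.





Section Bil.
Variable R : realType.
Local Notation C := R[i].
Local Notation Re := complex.Re.
Local Notation Im := complex.Im.
Variable V : lmodType C.
Variable B : V -> V -> C.
Hypothesis HB : hermitian_form B.

Lemma BDl u v w : B (u + v) w = B u w + B v w.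
Proof. by have := (HB.1 1 u v w); rewrite scale1r mul1r. Qed.
Lemma B0l w : B 0 w = 0.
Proof. have h := BDl 0 0 w; rewrite addr0 in h. by apply: (addrI (B 0 w)); rewrite -h addr0. Qed.
Lemma BZl a u w : B (a *: u) w = a * B u w.
Proof. by have := (HB.1 a u 0 w); rewrite addr0 B0l addr0. Qed.
Lemma BNl u w : B (- u) w = - B u w.
Proof. by rewrite -scaleN1r BZl mulN1r. Qed.
Lemma BBl u v w : B (u - v) w = B u w - B v w.
Proof. by rewrite BDl BNl. Qed.
Lemma Bsym u v : B v u = conjc (B u v).
Proof. exact: HB.2. Qed.
Lemma BDr u v w : B w (u + v) = B w u + B w v.
Proof. by rewrite !(Bsym _ w) BDl rmorphD. Qed.
Lemma BZr a u w : B w (a *: u) = conjc a * B w u.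
Proof. by rewrite !(Bsym _ w) BZl rmorphM. Qed.
Lemma B0r w : B w 0 = 0.
Proof. by rewrite Bsym B0l rmorph0. Qed.
Lemma BNr u w : B w (- u) = - B w u.
Proof. by rewrite -scaleN1r BZr rmorphN rmorph1 mulN1r. Qed.
Lemma BBr u v w : B w (u - v) = B w u - B w v.
Proof. by rewrite BDr BNr. Qed.
Lemma Bself_Im u : Im (B u u) = 0.
Proof. by apply: self_conj_Im; rewrite -Bsym. Qed.

Variable e0 : V.
Hypothesis HV : krein_1_inf B e0.
Variables eta1 eta2 : V.
Hypothesis Hi1 : isotropic B eta1.
Hypothesis Hi2 : isotropic B eta2.
Hypothesis H12 : B eta1 eta2 = 1.

Lemma H21 : B eta2 eta1 = 1.
Proof. by rewrite Bsym H12 rmorph1. Qed.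

Lemma perp_neg c : B c eta1 = 0 -> B c eta2 = 0 -> c <> 0 -> Re (B c c) < 0.
Proof.
move=> c1 c2 cn0; rewrite ltNge; apply/negP => hc.
case: HV => _ Hdef _ _ _.
set p := eta1 + eta2.
have Bpp : B p p = 2.
  by rewrite /p !BDl !BDr Hi1.2 Hi2.2 H12 H21 add0r addr0.
have Bcp : B c p = 0 by rewrite /p BDr c1 c2 addr0.
have Bpc : B p c = 0 by rewrite Bsym Bcp rmorph0.
set a := B p e0; set b := - B c e0.
set u := a *: c + b *: p.
have Bue : B u e0 = 0.
  by rewrite /u BDl !BZl /b /a; ring.
have Buu : B u u = a * conjc a * B c c + b * conjc b * 2.
  rewrite /u !BDl !BZl !BDr !BZr Bcp Bpc Bpp; ring.
have Reuu : 0 <= Re (B u u).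
  rewrite Buu ReD !Re_nrm; apply: addr_ge0; apply: mulr_ge0 => //;
    by rewrite addr_ge0 // sqr_ge0.
have [u0|un0] := eqVneq u 0.
  have hb : b = 0.
    have := congr1 (fun x => B x eta1) u0.
    have Bp1 : B p eta1 = 1 by rewrite /p BDl Hi1.2 H21 add0r.
    rewrite /u B0l !BDl !BZl c1 Bp1; by rewrite mulr0 add0r mulr1.
  have ha : a = 0.
    move: u0; rewrite /u hb scale0r addr0 => /eqP; rewrite scaler_eq0 => /orP[/eqP //|/eqP //].
  have pn0 : p <> 0 by move=> p0; move: Bpp; rewrite p0 B0l => /eqP; rewrite eq_sym pnatr_eq0.
  have := Hdef p ha pn0; rewrite Bpp ReN /=; lra.
have unz : u <> 0 by move=> h; move: un0; rewrite h eqxx.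
have := Hdef u Bue unz. rewrite ReN; lra.
Qed.

Lemma Bpair (a b c d : C) : B (a *: eta1 + b *: eta2) (c *: eta1 + d *: eta2) = a * conjc d + b * conjc c.
Proof. rewrite !BDl !BZl !BDr !BZr Hi1.2 Hi2.2 H12 H21; ring. Qed.

Lemma ReK T K c : in_UB B T -> T eta1 = eta1 -> T eta2 = K *: eta1 + eta2 + c ->
  B c eta1 = 0 -> B c eta2 = 0 -> 2 * Re K = - Re (B c c).
Proof.
case=> _ _ _ hT h1 h2 c1 c2.
have := hT eta2 eta2; rewrite h2 Hi2.2.
have e1 : B eta1 c = 0 by rewrite Bsym c1 rmorph0.
have e2 : B eta2 c = 0 by rewrite Bsym c2 rmorph0.
rewrite !BDl !BZl !BDr !BZr Hi1.2 Hi2.2 H12 H21 c1 c2 e1 e2 => h.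
have h' : K + conjc K + B c c = 0 by rewrite -h; ring.
have := congr1 (@complex.Re R) h'; rewrite !ReD ReJ /=; lra.
Qed.

Lemma ReK_ge0 T K c : in_UB B T -> T eta1 = eta1 -> T eta2 = K *: eta1 + eta2 + c ->
  B c eta1 = 0 -> B c eta2 = 0 -> 0 <= Re K /\ (Re K = 0 -> c = 0).
Proof.
move=> hT h1 h2 c1 c2; have e := ReK hT h1 h2 c1 c2; clear h1 h2.
have [c0|cn0] := eqVneq c 0.
  split; last by []. move: e; rewrite c0 B0l /=; lra.
have cn0' : c <> 0 by move=> h; move: cn0; rewrite h eqxx.
have := perp_neg c1 c2 cn0'.
move=> H; clear cn0 cn0'; split; first lra. move=> hK; exfalso; move: e H hK; apply: auxK.
Qed.

Definition Pset : set V := fun v => exists a b : C, v = a *: eta1 + b *: eta2.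

Lemma decomp u : u = (B u eta2 *: eta1 + B u eta1 *: eta2) + (u - B u eta2 *: eta1 - B u eta1 *: eta2).
Proof. by rewrite [RHS]addrC -[u - _ - _]addrA -opprD subrK. Qed.

Lemma decomp_perp u : let e := u - B u eta2 *: eta1 - B u eta1 *: eta2 in
  B e eta1 = 0 /\ B e eta2 = 0.
Proof. have h11 := Hi1.2; have h22 := Hi2.2. by split; rewrite !BBl !BZl ?h11 ?h22 ?H12 ?H21; ring. Qed.

Lemma perp_zero e : B e eta1 = 0 -> B e eta2 = 0 -> B e e = 0 -> e = 0.
Proof.
move=> h1 h2 h3; have [//|en0] := eqVneq e 0.
have en0' : e <> 0 by apply/eqP.
have := perp_neg h1 h2 en0'; by rewrite h3 /= ltxx.
Qed.

Lemma eigenP T a d mu u : in_UB B T -> T eta1 = a *: eta1 -> T eta2 = d *: eta2 -> a != d ->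
  T u = mu *: u -> B u u = 0 -> Pset u.
Proof.
case=> _ _ _ hB h1 h2 adn hu huu.
set al := B u eta2; set be := B u eta1.
have [e ee] : {e : V | e = u - al *: eta1 - be *: eta2} by eexists.
have [e1 e2] := decomp_perp u. rewrite -/al -/be -ee in e1 e2.
have ad : a * conjc d = 1 by have := hB eta1 eta2; rewrite h1 h2 BZl BZr H12 !mulr1.
have hal : mu * conjc d * al = al by have := hB u eta2; rewrite hu h2 BZl BZr mulrA.
have hbe : mu * conjc a * be = be by have := hB u eta1; rewrite hu h1 BZl BZr mulrA.
have ab0 : (al == 0) || (be == 0).
  have [a0|an0] := eqVneq al 0; first by apply/orP; left; apply/eqP.
  have [b0|bn0] := eqVneq be 0; first by apply/orP; right; apply/eqP.
  exfalso; move: adn => /negP; apply; apply/eqP.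
  have x1 : mu * conjc d = 1 by apply: (mulIf an0); rewrite mul1r.
  have x2 : mu * conjc a = 1 by apply: (mulIf bn0); rewrite mul1r.
  have mun0 : mu != 0 by apply/eqP => m0; move: x1; rewrite m0 mul0r => /eqP; rewrite eq_sym oner_eq0.
  have : conjc a = conjc d by apply: (mulfI mun0); rewrite x1 x2.
  by move/(congr1 conjc); rewrite !conjcK => ->.
have ue := decomp u. rewrite -/al -/be -ee in ue.
have eee : B e e = 0.
  have e1' : B eta1 e = 0 by rewrite Bsym e1 rmorph0.
  have e2' : B eta2 e = 0 by rewrite Bsym e2 rmorph0.
  move: huu; rewrite {1 2}ue BDl (BDr _ _ (al *: eta1 + be *: eta2)) (BDr _ _ e) Bpair.
  rewrite (BDr _ _ e) !BZr !BDl !BZl e1 e2 e1' e2'.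
  case/orP: ab0 => /eqP ->; rewrite ?rmorph0; by rewrite !mul0r !mulr0 !add0r ?addr0.
exists al, be; by rewrite {1}ue (perp_zero e1 e2 eee) addr0.
Qed.

Lemma he0 : B e0 e0 = 1. Proof. by case: HV. Qed.

Lemma hq z : B z e0 = 0 -> 0 <= Re (- B z z).
Proof.
move=> hz; have [->|zn0] := eqVneq z 0; first by rewrite B0l oppr0.
case: HV => _ Hdef _ _ _; apply: ltW; apply: Hdef => //; exact/eqP.
Qed.

Lemma CS x y : B x e0 = 0 -> B y e0 = 0 -> `|Re (B x y)| <= nrmW B x * nrmW B y.
Proof.
move=> hx hy.
have [->|yn0] := eqVneq y 0; first by rewrite B0r normr0 mulr_ge0 ?sqrtr_ge0.
have hyp : 0 < Re (- B y y).
  case: HV => _ Hdef _ _ _; apply: Hdef => //; exact/eqP.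
apply: aux_sqrt; [exact: hq | exact: hq |].
have -> : Re (B x y) ^+ 2 = Re (- B x y) ^+ 2 by rewrite ReN sqrrN.
apply: aux_cs => // t.
have hz : B (x + cR t *: y) e0 = 0 by rewrite BDl BZl hx hy mulr0 addr0.
have := hq hz.
rewrite !BDl !BZl !BDr !BZr (Bsym x y).
move: (B x x) (B x y) (B y y) => p q r.
rewrite !cxE /=. move=> h; apply: le_trans h _. rewrite le_eqVlt; apply/orP; left; apply/eqP; ring.
Qed.

Lemma Bbound r : exists Cr : R, 0 <= Cr /\ forall y, `|Re (B r y)| <= Cr * hnorm B e0 y.
Proof.
set a := B r e0; set r' := r - a *: e0.
have hr' : B r' e0 = 0 by rewrite /r' BBl BZl he0 mulr1 subrr.
exists (nrmW B r' + (`|Re a| + `|Im a|)); split.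
  by rewrite addr_ge0 ?sqrtr_ge0 // addr_ge0.
move=> y; set b := B y e0; set y' := y - b *: e0.
have hy' : B y' e0 = 0 by rewrite /y' BBl BZl he0 mulr1 subrr.
have hy'' : B e0 y' = 0 by rewrite Bsym hy' rmorph0.
have er : r = r' + a *: e0 by rewrite /r' subrK.
have ey : y = y' + b *: e0 by rewrite /y' subrK.
have Hb1 : `|Re b| <= modC b by apply: le_sqrt_l; rewrite sqr_ge0.
have Hb2 : `|Im b| <= modC b by rewrite /modC addrC; apply: le_sqrt_l; rewrite sqr_ge0.
have Hm : modC b <= hnorm B e0 y.
  rewrite /hnorm -/b; apply: le_trans (le_sqrt_l _ _) => //; last by rewrite sqr_ge0.
  by rewrite ger0_norm // sqrtr_ge0.
have Hn : nrmW B y' <= hnorm B e0 y.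
  rewrite /hnorm -/b -/y' addrC; apply: le_trans (le_sqrt_l _ _) => //; last by rewrite sqr_ge0.
  by rewrite ger0_norm // sqrtr_ge0.
clearbody r' y'.
have EB : B r y = B r' y' + a * conjc b.
  rewrite {1}er {1}ey BDl !BDr !BZl !BZr hr' hy'' he0; ring.
rewrite EB ReD.
apply: le_trans (ler_normD _ _) _.
have h1 := CS hr' hy'.
have h2 : `|Re (a * conjc b)| <= (`|Re a| + `|Im a|) * modC b.
  rewrite !cxE; apply: le_trans (ler_normD _ _) _.
  rewrite mulrN normrN !normrM mulrDl ?normrN ?normrM.
  by apply: lerD; apply: ler_wpM2l.
rewrite mulrDl; apply: lerD.
  apply: le_trans h1 _; apply: ler_wpM2l => //; exact: sqrtr_ge0.
apply: le_trans h2 _; apply: ler_wpM2l => //; by rewrite addr_ge0.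
Qed.

Lemma PsetD a u v : Pset u -> Pset v -> Pset (a *: u + v).
Proof.
move=> [a1 [b1 ->]] [a2 [b2 ->]]; exists (a * a1 + a2), (a * b1 + b2).
by rewrite scalerDr !scalerA !scalerDl addrACA.
Qed.
Lemma Pset0 : Pset 0.
Proof. by exists 0, 0; rewrite !scale0r addr0. Qed.
Lemma Pset1 : Pset eta1.
Proof. by exists 1, 0; rewrite scale1r scale0r addr0. Qed.
Lemma Pset2 : Pset eta2.
Proof. by exists 0, 1; rewrite scale1r scale0r add0r. Qed.
Lemma PsetZ a u : Pset u -> Pset (a *: u).
Proof. by move=> h; rewrite -[a *: u]addr0; apply: PsetD => //; exact: Pset0. Qed.
Lemma PsetDD u v : Pset u -> Pset v -> Pset (u + v).
Proof. by move=> h1 h2; rewrite -[u]scale1r; apply: PsetD. Qed.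

Lemma Pclosed : closed_subspace B e0 Pset.
Proof.
split; [exact: Pset0 | by move=> a u v; apply: PsetD |].
move=> u v hu hl.
have ue := decomp v.
have [e ee] : {e : V | e = v - B v eta2 *: eta1 - B v eta1 *: eta2} by eexists.
have [e1 e2] := decomp_perp v. rewrite -ee in e1 e2 ue.
have e1' : B eta1 e = 0 by rewrite Bsym e1 rmorph0.
have e2' : B eta2 e = 0 by rewrite Bsym e2 rmorph0.
have Bev : B e v = B e e.
  by rewrite {1}ue BDr !BDr !BZr e1 e2 !mulr0 !add0r.
have Beu : forall n, B e (u n) = 0.
  by move=> n; case: (hu n) => a [b ->]; rewrite BDr !BZr e1 e2 !mulr0 addr0.
have [Cr [hC hb]] := Bbound e.
have q0 : Re (B e e) = 0.
  apply: (lim0 hC hl) => n.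
  have -> : Re (B e e) = - Re (B e (u n - v)) by rewrite BBr Beu Bev sub0r ReN opprK.
  by rewrite normrN hb.
have e0' : e = 0.
  apply: perp_zero => //; apply: cplx_eq => //; by rewrite Bself_Im.
by rewrite ue e0' addr0; apply: PsetDD; apply: PsetZ; [exact: Pset1 | exact: Pset2].
Qed.

Lemma Ppos : Pset (eta1 + eta2) /\ positive B (eta1 + eta2).
Proof.
split; first by apply: PsetDD; [exact: Pset1 | exact: Pset2].
rewrite /positive !BDl !BDr Hi1.2 Hi2.2 H12 H21 add0r addr0 /=.
by rewrite addr_gt0 ?ltr01.
Qed.

Lemma PnotT : Pset <> setT.
Proof.
move=> PT.
case: HV => _ _ _ _ /(_ 2%N) [f [_ hf]].
have hP : forall v, Pset v by move=> v; rewrite PT.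
have [a0 [b0 ef0]] := hP (f 0); have [a1 [b1 ef1]] := hP (f 1).
have G : forall i j, B (f i) (f j) = - (i == j)%:R by move=> i j; rewrite -hf opprK.
have G00 := G 0 0; have G11 := G 1 1; have G01 := G 0 1; have G10 := G 1 0.
rewrite ef0 Bpair in G00; rewrite ef1 Bpair in G11.
rewrite ef0 ef1 Bpair in G01; rewrite ef1 ef0 Bpair in G10.
have key : (a0 * conjc b0 + b0 * conjc a0) * (a1 * conjc b1 + b1 * conjc a1)
  - (a0 * conjc b1 + b0 * conjc a1) * (a1 * conjc b0 + b1 * conjc a0)
  = - ((a0 * b1 - a1 * b0) * conjc (a0 * b1 - a1 * b0) * 1).
  rewrite rmorphB !rmorphM; ring.
rewrite G00 G11 G01 G10 /= in key.
have := congr1 (@complex.Re R) key.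
rewrite ReN Re_nrm /= => h.
have : 0 <= (Re (a0 * b1 - a1 * b0) ^+ 2 + Im (a0 * b1 - a1 * b0) ^+ 2) by rewrite addr_ge0 ?sqr_ge0.
move: h; rewrite !cxE /= => h1 h2; move: h2 h1.
set X := (_ ^+ 2 + _ ^+ 2); exact: aux2.
Qed.

Lemma irr_contra rho : irreducible B e0 rho ->
  (forall g, inSU11 g -> forall u, Pset u -> Pset (rho g u)) -> False.
Proof.
case=> _ _ H3 hinv; apply: H3; exists Pset; split; first exact: Pclosed.
split; first by exists (eta1 + eta2); exact: Ppos.
split; first exact: PnotT.
exact: hinv.
Qed.
End Bil.


Section MX.
Variable R : realType.
Local Notation C := R[i].
Local Notation Re := complex.Re.
Local Notation Im := complex.Im.
Definition Mx (lam b : R) : 'M[C]_2 := \matrix_(i < 2, j < 2)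
            (if i == 0 then (if j == 0 then cR lam else Complex 0 b)
             else (if j == 0 then 0 else cR lam^-1)).
Lemma gmatE (lam b : R) : gmat lam b = Pxi R *m Mx lam b *m Pxi R. Proof. by []. Qed.

Lemma s2 : (Num.sqrt (2:R))^-1 * (Num.sqrt 2)^-1 = 2^-1.
Proof. by rewrite -invfM -expr2 sqr_sqrtr // ler0n. Qed.


Lemma ord2 (i : 'I_2) : i = 0 \/ i = 1.
Proof. case: i => [[|[|k]] Hk]; [left|right|by []]; exact: val_inj. Qed.
Lemma sum2 (F : 'I_2 -> C) : \sum_(k < 2) F k = F 0 + F 1.
Proof.
rewrite !big_ord_recl big_ord0.
have -> : lift ord0 (ord0 : 'I_1) = 1 :> 'I_2 by apply: val_inj.
by rewrite GRing.addr0.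
Qed.
Lemma o10 : (1 == 0 :> 'I_2) = false. Proof. by []. Qed.
Lemma o01 : (0 == 1 :> 'I_2) = false. Proof. by []. Qed.

Ltac mxcase := apply/matrixP; let i := fresh "i" in let j := fresh "j" in
  move=> i j; case: (ord2 i) => ->; case: (ord2 j) => ->;
  rewrite ?mxE ?sum2 ?mxE ?sum2 ?mxE ?sum2 ?mxE ?o10 ?o01 ?eqxx /=.

Lemma PxiK : Pxi R *m Pxi R = 1.
Proof.
mxcase. all: apply: cplx_eq; rewrite /= ?mxE; have := s2; set s := _^-1; nra.
Qed.

Lemma det2 (M : 'M[C]_2) : \det M = M 0 0 * M 1 1 - M 0 1 * M 1 0.
Proof.
rewrite (expand_det_row _ 0) sum2 /cofactor !det_mx11 !mxE.
have -> : lift 0 (0 : 'I_1) = 1 :> 'I_2 by apply: val_inj.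
have -> : lift 1 (0 : 'I_1) = 0 :> 'I_2 by apply: val_inj.
rewrite !exprD /= !expr0 expr1 !mul1r mulN1r mulrN //.
Qed.

Definition Jx : 'M[C]_2 := \matrix_(i < 2, j < 2) (if i == j then 0 else 1).
Definition Wx : 'M[C]_2 := \matrix_(i < 2, j < 2) (if i == j then 0 else Complex 0 1).
Definition Wm : 'M[C]_2 := Pxi R *m Wx *m Pxi R.
Definition SUx (M : 'M[C]_2) := adjM M *m Jx *m M = Jx /\ \det M = 1.

Lemma adjM_mul (A B : 'M[C]_2) : adjM (A *m B) = adjM B *m adjM A.
Proof. by rewrite /adjM map_mxM trmx_mul. Qed.
Lemma adjM1 : adjM (1 : 'M[C]_2) = 1.
Proof. by rewrite /adjM map_mx1 trmx1. Qed.
Lemma Pxi_adj : adjM (Pxi R) = Pxi R.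
Proof. rewrite /adjM; mxcase; apply: cplx_eq; rewrite /= ?mxE //=; lra. Qed.
Lemma PJP : Pxi R *m J11 R *m Pxi R = Jx.
Proof. mxcase. all: apply: cplx_eq; rewrite /= ?mxE; have := s2; set s := _^-1; nra. Qed.
Lemma detP : \det (Pxi R) * \det (Pxi R) = 1.
Proof. by rewrite -det_mulmx PxiK det1. Qed.

Lemma PcancelL (M N : 'M[C]_2) : Pxi R *m M *m Pxi R = Pxi R *m N *m Pxi R -> M = N.
Proof.
move=> h. have := congr1 (fun X => Pxi R *m X *m Pxi R) h.
rewrite /= !mulmxA PxiK !mul1mx -!mulmxA PxiK !mulmx1 //.
Qed.

Lemma SU_iff M : inSU11 (Pxi R *m M *m Pxi R) <-> SUx M.
Proof.
have e : adjM (Pxi R *m M *m Pxi R) *m J11 R *m (Pxi R *m M *m Pxi R)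
   = Pxi R *m (adjM M *m Jx *m M) *m Pxi R.
  by rewrite !adjM_mul Pxi_adj -PJP !mulmxA.
have dP : \det (Pxi R *m M *m Pxi R) = \det M.
  by rewrite !det_mulmx mulrC mulrA detP mul1r.
have eJ : J11 R = Pxi R *m Jx *m Pxi R.
  by rewrite -PJP !mulmxA PxiK mul1mx -mulmxA PxiK mulmx1.
rewrite /inSU11 /SUx e dP; split => [[h1 h2]|[h1 h2]]; split => //.
  by apply: PcancelL; rewrite h1 eJ.
by rewrite h1 eJ.
Qed.

Lemma SUx_mul A B : SUx A -> SUx B -> SUx (A *m B).
Proof.
move=> [a1 a2] [b1 b2]; split; last by rewrite det_mulmx a2 b2 mulr1.
by rewrite adjM_mul !mulmxA -(mulmxA _ (adjM A)) -(mulmxA _ (adjM A *m Jx)) a1 b1.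
Qed.

Lemma Mx_mul (l m b c : R) : l != 0 -> m != 0 ->
  Mx l b *m Mx m c = Mx (l * m) (l * c + b / m).
Proof. move=> hl hm; mxcase; apply: cplx_eq; rewrite /=; field; by rewrite ?hl ?hm ?mulf_neq0. Qed.
Lemma Mx10 : Mx 1 0 = 1.
Proof. mxcase; apply: cplx_eq; rewrite /= ?invr1 //. Qed.
Lemma WxMx (l : R) : l != 0 -> Wx *m Mx l 0 = Mx l^-1 0 *m Wx.
Proof. move=> hl; mxcase; apply: cplx_eq; rewrite /= ?invrK; field; by rewrite ?hl. Qed.
Lemma SUx_Mx (l b : R) : l != 0 -> SUx (Mx l b).
Proof.
move=> hl; split; last by rewrite det2 !mxE /=; apply: cplx_eq; rewrite /=; field.
rewrite /adjM; mxcase; apply: cplx_eq; rewrite /=; field; by rewrite ?hl.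
Qed.
Lemma SUx_Wx : SUx Wx.
Proof.
split; last by rewrite det2 !mxE /=; apply: cplx_eq; rewrite /=; ring.
rewrite /adjM; mxcase; apply: cplx_eq; rewrite /=; ring.
Qed.

Definition M4 (A X Y D : R) : 'M[C]_2 := \matrix_(i < 2, j < 2)
  (if i == 0 then (if j == 0 then cR A else Complex 0 X)
   else (if j == 0 then Complex 0 Y else cR D)).

Lemma SUx_M4 M : SUx M -> exists A X Y D, M = M4 A X Y D /\ A * D + X * Y = 1.
Proof.
move=> [h1 h2].
have [a ea] : {a : C | M 0 0 = a} by exists (M 0 0).
have [x ex] : {a : C | M 0 1 = a} by exists (M 0 1).
have [y ey] : {a : C | M 1 0 = a} by exists (M 1 0).
have [d ed] : {a : C | M 1 1 = a} by exists (M 1 1).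
have DD : a * d - x * y = 1 by rewrite -h2 det2 ea ex ey ed.
have E1 : conjc a * y + conjc y * a = 0.
  have e : conjc a * y + conjc y * a = (adjM M *m Jx *m M) 0 0.
    by rewrite /adjM !mxE !sum2 !mxE !sum2 !mxE ?o10 ?o01 ?eqxx /= ?ea ?ex ?ey ?ed; ring.
  by rewrite e h1 mxE eqxx.
have E2 : conjc a * d + conjc y * x = 1.
  have e : conjc a * d + conjc y * x = (adjM M *m Jx *m M) 0 1.
    by rewrite /adjM !mxE !sum2 !mxE !sum2 !mxE ?o10 ?o01 ?eqxx /= ?ea ?ex ?ey ?ed; ring.
  by rewrite e h1 mxE o01.
have E3 : conjc x * y + conjc d * a = 1.
  have e : conjc x * y + conjc d * a = (adjM M *m Jx *m M) 1 0.
    by rewrite /adjM !mxE !sum2 !mxE !sum2 !mxE ?o10 ?o01 ?eqxx /= ?ea ?ex ?ey ?ed; ring.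
  by rewrite e h1 mxE o10.
have E4 : conjc x * d + conjc d * x = 0.
  have e : conjc x * d + conjc d * x = (adjM M *m Jx *m M) 1 1.
    by rewrite /adjM !mxE !sum2 !mxE !sum2 !mxE ?o10 ?o01 ?eqxx /= ?ea ?ex ?ey ?ed; ring.
  by rewrite e h1 mxE eqxx.
have ha : conjc a = a.
  apply/eqP; rewrite -subr_eq0; apply/eqP.
  have -> : conjc a - a = - conjc a * (a*d - x*y - 1) + a * (conjc a * d + conjc y * x - 1)
     - x * (conjc a * y + conjc y * a) by ring.
  by rewrite DD E2 E1; ring.
have hy : conjc y = - y.
  apply/eqP; rewrite -subr_eq0 opprK; apply/eqP.
  have -> : conjc y + y = - conjc y * (a*d - x*y - 1) + d * (conjc a * y + conjc y * a)
     - y * (conjc a * d + conjc y * x - 1) by ring.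
  by rewrite DD E2 E1 ; ring.
have hx : conjc x = - x.
  apply/eqP; rewrite -subr_eq0 opprK; apply/eqP.
  have -> : conjc x + x = - conjc x * (a*d - x*y - 1) + a * (conjc x * d + conjc d * x)
     - x * (conjc x * y + conjc d * a - 1) by ring.
  by rewrite DD E4 E3 ; ring.
have hd : conjc d = d.
  apply/eqP; rewrite -subr_eq0; apply/eqP.
  have -> : conjc d - d = - conjc d * (a*d - x*y - 1) + d * (conjc x * y + conjc d * a - 1)
     - y * (conjc x * d + conjc d * x) by ring.
  by rewrite DD E4 E3 ; ring.
have Ia : Im a = 0 by move: (congr1 (@complex.Im R) ha); rewrite ImJ; lra.
have Id : Im d = 0 by move: (congr1 (@complex.Im R) hd); rewrite ImJ; lra.
have Rx : Re x = 0 by move: (congr1 (@complex.Re R) hx); rewrite ReJ ReN; lra.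
have Ry : Re y = 0 by move: (congr1 (@complex.Re R) hy); rewrite ReJ ReN; lra.
exists (Re a), (Im x), (Im y), (Re d); split.
  apply/matrixP => i j; case: (ord2 i) => ->; case: (ord2 j) => ->;
    rewrite !mxE ?o10 ?o01 ?eqxx /= ?ea ?ex ?ey ?ed; apply: cplx_eq; rewrite /= //.
have := congr1 (@complex.Re R) DD; rewrite !cxE Ia Id Rx Ry /=; lra.
Qed.

Lemma SUx_dec M : SUx M -> (exists l b, l != 0 /\ M = Mx l b) \/
  (exists b1 l b2, l != 0 /\ M = Mx 1 b1 *m Wx *m Mx l b2).
Proof.
move=> /SUx_M4 [A [X [Y [D [-> h]]]]].
have [Y0|Yn0] := eqVneq Y 0.
  left. rewrite Y0 mulr0 addr0 in h.
  have An0 : A != 0 by apply/eqP => A0; move: h; rewrite A0 mul0r => /eqP; rewrite eq_sym oner_eq0.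
  have DA : D = A^-1 by apply: (mulfI An0); rewrite h divff.
  exists A, X; split => //.
  apply/matrixP => i j; case: (ord2 i) => ->; case: (ord2 j) => ->;
    rewrite !mxE ?o10 ?o01 ?eqxx /= ?Y0 ?DA //.
right. exists (- A / Y), Y, (- D); split => //.
have HX : X = (1 - A * D) / Y by rewrite -h; field.
mxcase; apply: cplx_eq; rewrite /= ?HX; by field; rewrite ?Yn0.
Qed.

Lemma gmat_mul (l m b c : R) : l != 0 -> m != 0 ->
  gmat l b *m gmat m c = gmat (l * m) (l * c + b / m).
Proof.
move=> hl hm; rewrite !gmatE -!mulmxA (mulmxA (Pxi R) (Pxi R)) PxiK mul1mx.
by rewrite (mulmxA (Mx l b)) Mx_mul // mulmxA.
Qed.
End MX.


Section MX2.
Variable R : realType.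
Local Notation C := R[i].
Lemma gmat10 : gmat (1:R) 0 = 1.
Proof. by rewrite gmatE Mx10 mulmx1 PxiK. Qed.
Lemma Wm_gmat (l : R) : l != 0 -> Wm R *m gmat l 0 = gmat l^-1 0 *m Wm R.
Proof.
move=> hl; rewrite /Wm !gmatE -!mulmxA (mulmxA (Pxi R) (Pxi R)) PxiK mul1mx.
by rewrite (mulmxA (Pxi R) (Pxi R)) PxiK mul1mx (mulmxA (Wx R)) WxMx // !mulmxA.
Qed.
Lemma SU_gmat (l b : R) : l != 0 -> inSU11 (gmat l b).
Proof. by move=> hl; rewrite gmatE; apply/SU_iff/SUx_Mx. Qed.
Lemma SU_Wm : inSU11 (Wm R).
Proof. by apply/SU_iff/SUx_Wx. Qed.
Lemma PPK (g : 'M[C]_2) : g = Pxi R *m (Pxi R *m g *m Pxi R) *m Pxi R.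
Proof. by rewrite !mulmxA PxiK mul1mx -mulmxA PxiK mulmx1. Qed.
Lemma conjM (A B : 'M[C]_2) :
  (Pxi R *m A *m Pxi R) *m (Pxi R *m B *m Pxi R) = Pxi R *m (A *m B) *m Pxi R.
Proof. by rewrite !mulmxA -(mulmxA _ (Pxi R) (Pxi R)) PxiK mulmx1. Qed.
Lemma SU_mul (g h : 'M[C]_2) : inSU11 g -> inSU11 h -> inSU11 (g *m h).
Proof.
move=> hg hh.
have hg' : SUx (Pxi R *m g *m Pxi R) by apply/SU_iff; rewrite -(PPK g).
have hh' : SUx (Pxi R *m h *m Pxi R) by apply/SU_iff; rewrite -(PPK h).
have := (SU_iff ((Pxi R *m g *m Pxi R) *m (Pxi R *m h *m Pxi R))).2 (SUx_mul hg' hh').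
by rewrite (conjM g h) -(PPK (g *m h)).
Qed.
Lemma SU_dec (g : 'M[C]_2) : inSU11 g -> (exists l b, l != 0 /\ g = gmat l b) \/
  (exists b1 l b2, l != 0 /\ g = gmat 1 b1 *m (Wm R *m gmat l b2)).
Proof.
move=> hg.
have hg' : SUx (Pxi R *m g *m Pxi R) by apply/SU_iff; rewrite -(PPK g).
have eg := PPK g.
case: (SUx_dec hg') => [[l [b [hl e]]]|[b1 [l [b2 [hl e]]]]]; rewrite e in eg.
  by left; exists l, b.
right; exists b1, l, b2; split => //.
rewrite eg /Wm !gmatE (conjM (Wx R)) (conjM (Mx 1 b1)).
by rewrite (mulmxA (Mx 1 b1)).
Qed.
End MX2.

Lemma inf_le0 (R : realType) (E : set R) : E 0 -> inf E <= 0.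
Proof.
move=> E0; case: (pselect (has_lbound E)) => [hl|hn].
  exact: (ge_inf hl E0).
by rewrite inf_out // => -[].
Qed.

Lemma unimod_neq0 (R : realType) (c : R[i]) : unimod c -> c != 0.
Proof.
move=> hc; apply/eqP => c0; move: hc; rewrite /unimod /modC c0 /= expr0n /= addr0 sqrtr0.
by move/eqP; rewrite eq_sym oner_eq0.
Qed.

Section Rep.
Variable R : realType.
Local Notation C := R[i].
Local Notation Re := complex.Re.
Local Notation Im := complex.Im.
Variable V : lmodType C.
Variable B : V -> V -> C.
Hypothesis HB : hermitian_form B.
Variable e0 : V.
Hypothesis HV : krein_1_inf B e0.
Variables eta1 eta2 : V.
Hypothesis Hi1 : isotropic B eta1.
Hypothesis Hi2 : isotropic B eta2.
Hypothesis H12 : B eta1 eta2 = 1.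
Variable rho : 'M[C]_2 -> V -> V.
Hypothesis Hrep : is_rep B rho.

Local Notation P := (Pset eta1 eta2).
Definition InvP (T : V -> V) := forall u, P u -> P (T u).

Lemma UBlin T a u v : in_UB B T -> T (a *: u + v) = a *: T u + T v.
Proof. by case=> hD hZ _ _; rewrite hD hZ. Qed.
Lemma UB0 T : in_UB B T -> T 0 = 0.
Proof. by move=> [_ hZ _ _]; have := hZ 0 0; rewrite !scale0r. Qed.
Lemma UBZ T a u : in_UB B T -> T (a *: u) = a *: T u.
Proof. by case. Qed.
Lemma UBinj T : in_UB B T -> injective T.
Proof. by case=> _ _ hb _; exact: bij_inj. Qed.

Lemma Tlin2 T a1 a2 u1 u2 : in_UB B T -> T (a1 *: u1 + a2 *: u2) = a1 *: T u1 + a2 *: T u2.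
Proof. by move=> h; rewrite (UBlin a1 u1 (a2 *: u2) h) (UBZ a2 u2 h). Qed.

Lemma InvP_of T : in_UB B T -> P (T eta1) -> P (T eta2) -> InvP T.
Proof.
move=> hT h1 h2 u [a [b ->]]; rewrite UBlin // UBZ //.
by apply: PsetD => //; apply: PsetZ.
Qed.

Lemma rho_UB g : inSU11 g -> in_UB B (rho g).
Proof. by case: Hrep => h _ _ _; apply: h. Qed.

Lemma rho_mul g h : inSU11 g -> inSU11 h -> exists c, c != 0 /\ forall v, rho (g *m h) v = c *: rho g (rho h v).
Proof.
case: Hrep => _ h2 _ _ hg hh; have [c [hc e]] := h2 g h hg hh.
by exists c; split => //; exact: unimod_neq0.
Qed.

Lemma SU1 : inSU11 (1 : 'M[C]_2).
Proof. by rewrite -gmat10; apply: SU_gmat; rewrite oner_neq0. Qed.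

Lemma rho1 : exists k, forall v, rho 1 v = k *: v.
Proof.
have [c [cn0 e]] := rho_mul SU1 SU1.
have [_ _ [f fK Kf] _] := rho_UB SU1.
exists c^-1 => w; have := e (f w); rewrite mul1mx Kf => hw.
by rewrite [in RHS]hw scalerA mulVf // scale1r.
Qed.

Lemma InvP1 : InvP (rho 1).
Proof. have [k hk] := rho1; move=> u hu; rewrite hk; exact: PsetZ. Qed.

Lemma InvP_mul g h : inSU11 g -> inSU11 h -> InvP (rho g) -> InvP (rho h) -> InvP (rho (g *m h)).
Proof.
move=> hg hh Ig Ih u hu; have [c [_ e]] := rho_mul hg hh.
by rewrite e; apply: PsetZ; apply: Ig; apply: Ih.
Qed.

Lemma InvP_inv g h : inSU11 g -> inSU11 h -> g *m h = 1 -> InvP (rho h) ->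
  fixes_line (rho h) eta1 -> InvP (rho g).
Proof.
move=> hg hh gh Ih [a ha].
have hT := rho_UB hh.
have [p [q hq]] := Ih _ (Pset2 eta1 eta2).
have an0 : a != 0.
  apply/eqP => a0; apply: Hi1.1; apply: (UBinj hT); by rewrite ha a0 scale0r UB0.
have qn0 : q != 0.
  apply/eqP => q0; move: hq; rewrite q0 scale0r addr0 => hq.
  have : eta2 = (p / a) *: eta1.
    apply: (UBinj hT); by rewrite hq (UBZ (T:=rho h)) // ha scalerA mulfVK.
  move/(congr1 (fun x => B x eta1)); rewrite (BZl HB) Hi1.2 mulr0 (Bsym HB) H12 rmorph1.
  by move/eqP; rewrite oner_eq0.
have pre : forall u, P u -> exists v, P v /\ rho h v = u.
  move=> u [al [be ->]].
  set x1 := al / a - be * p / (a * q); set x2 := be / q.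
  exists (x1 *: eta1 + x2 *: eta2); split.
    by apply: PsetD; [exact: Pset1 | apply: PsetZ; exact: Pset2].
  rewrite (Tlin2 x1 x2 eta1 eta2 hT) ha hq scalerDr !scalerA addrA -scalerDl.
  have -> : x1 * a + x2 * p = al by rewrite /x1 /x2; field; rewrite an0 qn0.
  by have -> : x2 * q = be by rewrite /x2 mulfVK.
have [c [cn0 e]] := rho_mul hg hh.
have [k hk] := rho1.
move=> u /pre [v [hv <-]].
have : rho (g *m h) v = c *: rho g (rho h v) by rewrite e.
rewrite gh hk => e2.
have -> : rho g (rho h v) = (c^-1 * k) *: v by rewrite -scalerA e2 scalerA mulVf // scale1r.
exact: PsetZ.
Qed.

Hypothesis Hf1 : forall lam b : R, lam != 0 -> fixes_line (rho (gmat lam b)) eta1.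
Hypothesis Hf2 : forall lam : R, lam != 0 -> fixes_line (rho (gmat lam 0)) eta2.

Lemma InvP_diag (l : R) : l != 0 -> InvP (rho (gmat l 0)).
Proof.
move=> hl; apply: InvP_of; first by apply: rho_UB; apply: SU_gmat.
  by have [a ->] := Hf1 0 hl; apply: PsetZ; exact: Pset1.
by have [a ->] := Hf2 hl; apply: PsetZ; exact: Pset2.
Qed.

Lemma InvP_unip_pos (b : R) : b != 0 -> InvP (rho (gmat 1 b)) ->
  forall y : R, 0 < y / b -> InvP (rho (gmat 1 y)).
Proof.
move=> hb Ib y hy.
set m := Num.sqrt (y / b).
have mn0 : m != 0 by rewrite /m sqrtr_eq0 -ltNge.
have mi0 : m^-1 != 0 by rewrite invr_eq0.
have e : gmat m 0 *m gmat 1 b *m gmat m^-1 0 = gmat 1 y.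
  rewrite gmat_mul ?oner_neq0 // gmat_mul //; last by rewrite mulr1.
  have m2 : m * m = y / b by rewrite -expr2 sqr_sqrtr // ltW.
  congr gmat; first by rewrite mulr1 mulfV.
  rewrite mulr0 add0r invrK divr1 addr0 mulrAC m2; field; exact: hb.
rewrite -e; apply: InvP_mul.
- by apply: SU_mul; apply: SU_gmat; rewrite ?oner_neq0.
- by apply: SU_gmat.
- by apply: InvP_mul => //; [apply: SU_gmat | apply: SU_gmat; rewrite oner_neq0 | exact: InvP_diag].
- exact: InvP_diag.
Qed.

Lemma InvP_unip (b : R) : b != 0 -> InvP (rho (gmat 1 b)) -> forall y : R, InvP (rho (gmat 1 y)).
Proof.
move=> hb Ib y.
have [y0|yn0] := eqVneq y 0; first by rewrite y0 gmat10; exact: InvP1.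
have [hp|hn] := ltP 0 (y / b); first exact: (InvP_unip_pos hb Ib hp).
have hn' : 0 < - y / b.
  have yb0 : y / b != 0 by rewrite mulf_neq0 // invr_eq0.
  by rewrite mulNr oppr_gt0 lt_neqAle hn andbT yb0.
apply: (@InvP_inv _ (gmat 1 (- y))).
- by apply: SU_gmat; rewrite oner_neq0.
- by apply: SU_gmat; rewrite oner_neq0.
- by rewrite gmat_mul ?oner_neq0 // mulr1 mul1r divr1 addrC subrr gmat10.
- exact: (InvP_unip_pos hb Ib hn').
- by apply: Hf1; rewrite oner_neq0.
Qed.

Lemma InvP_gmat (b : R) : b != 0 -> InvP (rho (gmat 1 b)) ->
  forall l y : R, l != 0 -> InvP (rho (gmat l y)).
Proof.
move=> hb Ib l y hl.
have -> : gmat l y = gmat l 0 *m gmat 1 (y / l).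
  rewrite gmat_mul ?oner_neq0 //; congr gmat; [by rewrite mulr1 | by rewrite mul0r addr0 mulrC mulfVK].
apply: InvP_mul; [exact: SU_gmat | by apply: SU_gmat; rewrite oner_neq0 | exact: InvP_diag | exact: (InvP_unip hb Ib)].
Qed.

Variable t : R.
Hypothesis Ht : 0 < t.
Hypothesis Hl : forall lam : R, 0 < lam -> displacement B (rho (gmat lam 0)) = t * `|ln lam|.

Lemma diag_distinct a d : rho (gmat 2 0) eta1 = a *: eta1 -> rho (gmat 2 0) eta2 = d *: eta2 -> a != d.
Proof.
move=> h1 h2; apply/eqP => ad; rewrite -ad in h2.
have h20 : (2:R) != 0 by rewrite pnatr_eq0.
have hT := rho_UB (SU_gmat 0 h20).
set T := rho (gmat 2 0) in h1 h2 hT.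
have [hD _ _ hBT] := hT.
have aa : a * conjc a = 1.
  by have := hBT eta1 eta2; rewrite h1 h2 (BZl HB) (BZr HB) H12 mulr1.
have aa2 : Re a ^+ 2 + Im a ^+ 2 = 1.
  have := congr1 (@complex.Re R) (congr1 (fun z => z * 1) aa); rewrite Re_nrm /= mulr1 mulr1 mulr0 subr0 => h; exact: h.
set v := eta1 + eta2.
have Tv : T v = a *: v by rewrite /v hD h1 h2 scalerDr.
have Bvv : B v v = cR 2.
  rewrite /v !(BDl HB) !(BDr HB) Hi1.2 Hi2.2 H12 (H21 HB H12) add0r addr0.
  by apply: cplx_eq; rewrite /= ?addr0.
have BTT : B (a *: v) (a *: v) = cR 2 by rewrite -Tv hBT.
have pv : positive B v by rewrite /positive Bvv /= ltr0n.
have hd : hdist B (T v) v = 0.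
  rewrite /hdist Tv BTT (BZl HB) Bvv /= /modC.
  have -> : Re (a * cR 2) ^+ 2 + Im (a * cR 2) ^+ 2 = 2 ^+ 2.
    rewrite !cxE /=; transitivity (2 ^+ 2 * (Re a ^+ 2 + Im a ^+ 2)); [ring | by rewrite aa2 mulr1].
  rewrite sqrtr_sqr divff ?normr_eq0 ?pnatr_eq0 //.
  by rewrite /arccosh expr1n subrr sqrtr0 addr0 ln1.
have dle : displacement B T <= 0.
  by apply: inf_le0; exists v => //.
have := Hl (ltr0n R 2); rewrite -/T => e.
have : 0 < t * `|ln (2:R)| by rewrite mulr_gt0 // normr_gt0 gt_eqF // ln_gt0 // ltr1n.
by rewrite -e ltNge dle.
Qed.

Lemma InvP_W : InvP (rho (Wm R)).
Proof.
have h20 : (2:R) != 0 by rewrite pnatr_eq0.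
have hi : (2^-1 : R) != 0 by rewrite invr_eq0.
have eW : Wm R *m gmat 2^-1 0 = gmat 2 0 *m Wm R by rewrite Wm_gmat // invrK.
have [c1 [c1n e1]] := rho_mul (SU_Wm R) (SU_gmat 0 hi).
have [c2 [c2n e2]] := rho_mul (SU_gmat 0 h20) (SU_Wm R).
have [a h1a] := Hf1 0 h20; have [d h2d] := Hf2 h20.
have adn := diag_distinct h1a h2d.
have hW := rho_UB (SU_Wm R).
have key : forall w a', rho (gmat 2^-1 0) w = a' *: w -> B w w = 0 -> P (rho (Wm R) w).
  move=> w a' hw hww.
  apply: (eigenP HB HV Hi1 Hi2 H12 (rho_UB (SU_gmat 0 h20)) h1a h2d adn (mu := c2^-1 * (c1 * a'))).
    have := e1 w; rewrite eW e2 hw (UBZ _ _ hW) scalerA => h.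
    by rewrite -scalerA -h scalerA mulVf // scale1r.
  by case: hW => _ _ _ ->.
apply: InvP_of => //.
  have [a' ha'] := Hf1 0 hi; exact: (key _ a' ha' Hi1.2).
have [a' ha'] := Hf2 hi; exact: (key _ a' ha' Hi2.2).
Qed.

Lemma InvP_all b : b != 0 -> InvP (rho (gmat 1 b)) -> forall g, inSU11 g -> InvP (rho g).
Proof.
move=> hb Ib g /SU_dec [[l [y [hl ->]]]|[b1 [l [b2 [hl ->]]]]].
  exact: (InvP_gmat hb Ib y hl).
have o1 : (1:R) != 0 by rewrite oner_neq0.
apply: InvP_mul.
- exact: SU_gmat.
- by apply: SU_mul; [exact: (SU_Wm R) | exact: SU_gmat].
- exact: (InvP_gmat hb Ib b1 o1).
apply: InvP_mul; [exact: (SU_Wm R) | exact: SU_gmat | exact: InvP_W | exact: (InvP_gmat hb Ib b2 hl)].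
Qed.

Hypothesis Hirr : irreducible B e0 rho.

Lemma key_contra b T K : b != 0 -> in_UB B T ->
  (exists c, unimod c /\ forall v, T v = c *: rho (gmat 1 b) v) ->
  T eta1 = eta1 -> T eta2 = K *: eta1 + eta2 -> False.
Proof.
move=> hb hT [c [hc ec]] h1 h2.
have cn0 := unimod_neq0 hc.
have o1 : (1:R) != 0 by rewrite oner_neq0.
have er : forall v, rho (gmat 1 b) v = c^-1 *: T v.
  by move=> v; rewrite ec scalerA mulVf // scale1r.
have Ib : InvP (rho (gmat 1 b)).
  apply: InvP_of; first exact: (rho_UB (SU_gmat b o1)).
    by rewrite er h1; apply: PsetZ; exact: Pset1.
  by rewrite er h2; apply: PsetZ; apply: PsetD; [exact: Pset1 | exact: Pset2].
apply: (irr_contra HB HV Hi1 Hi2 H12 Hirr) => g hg.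
exact: (InvP_all hb Ib hg).
Qed.
End Rep.

End Aux.
Import Aux.

Lemma auxRe (R : realType) (x y : R) : 0 <= x -> 0 <= y -> x + y = 0 -> x = 0.
Proof. move=> hx hy h; apply/eqP; rewrite eq_le hx andbT -h lerDl //. Qed.

Theorem mainTheorem18 (R : realType) (V : lmodType R[i]) (B : V -> V -> R[i])
  (e0 : V) (HB : hermitian_form B) (HV : krein_1_inf B e0)
  (rho1 rho2 : 'M[R[i]]_2 -> V -> V)
  (Hrep1 : is_rep B rho1) (Hrep2 : is_rep B rho2)
  (Hirr1 : irreducible B e0 rho1) (Hirr2 : irreducible B e0 rho2)
  (* ell(rho1) = ell(rho2) = t *)
  (t : R) (Ht : 0 < t)
  (Hl1 : forall lam : R, 0 < lam -> displacement B (rho1 (gmat lam 0)) = t * `|ln lam|)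
  (Hl2 : forall lam : R, 0 < lam -> displacement B (rho2 (gmat lam 0)) = t * `|ln lam|)
  (* common distinguished isotropic representatives *)
  (eta1 eta2 : V) (Hi1 : isotropic B eta1) (Hi2 : isotropic B eta2)
  (H12 : B eta1 eta2 = 1)
  (Hfix1 : forall lam b : R, lam != 0 ->
      fixes_line (rho1 (gmat lam b)) eta1 /\ fixes_line (rho2 (gmat lam b)) eta1)
  (Hfix2 : forall lam : R, lam != 0 ->
      fixes_line (rho1 (gmat lam 0)) eta2 /\ fixes_line (rho2 (gmat lam 0)) eta2)
  (* the functions K_1, K_2 at b *)
  (b : R) (Hb : b != 0)
  (T1 T2 : V -> V) (K1 K2 : R[i]) (c1 c2 : V)
  (HT1 : in_UB B T1 /\ (exists c, unimod c /\ forall v, T1 v = c *: rho1 (gmat 1 b) v))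
  (HT2 : in_UB B T2 /\ (exists c, unimod c /\ forall v, T2 v = c *: rho2 (gmat 1 b) v))
  (HT1e : T1 eta1 = eta1) (HT2e : T2 eta1 = eta1)
  (HK1 : T1 eta2 = K1 *: eta1 + eta2 + c1 /\ B c1 eta1 = 0 /\ B c1 eta2 = 0)
  (HK2 : T2 eta2 = K2 *: eta1 + eta2 + c2 /\ B c2 eta1 = 0 /\ B c2 eta2 = 0) :
  K1 + K2 != 0.

Proof.
apply/eqP => hK.
have [r1 z1] := ReK_ge0 HB HV Hi1 Hi2 H12 HT1.1 HT1e HK1.1 HK1.2.1 HK1.2.2.
have [r2 z2] := ReK_ge0 HB HV Hi1 Hi2 H12 HT2.1 HT2e HK2.1 HK2.2.1 HK2.2.2.
have e : complex.Re K1 + complex.Re K2 = 0.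
  by rewrite -ReD hK.
have hR := @auxRe _ _ _ r1 r2 e.
have c10 : c1 = 0 by apply: z1.
have h2 : T1 eta2 = K1 *: eta1 + eta2 by rewrite HK1.1 c10 addr0.
exact: (key_contra HB HV Hi1 Hi2 H12 Hrep1 (fun lam b h => (Hfix1 lam b h).1)
   (fun lam h => (Hfix2 lam h).1) Ht Hl1 Hirr1 Hb HT1.1 HT1.2 HT1e h2).
Qed.
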